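(* Let $K,L\ (\le K),F,Z,S,g$ be positive integers and let $\mathbf{A}$ be a $g$-regular $(K,L,F,Z,S)$ EPDA. Then the multi-antenna coded caching scheme obtained from $\mathbf{A}$ (with delivery time $T=\frac{S}{F}$) satisfies $$T=\frac{K}{g}\left(1-\frac{Z}{F}\right),$$ and moreover $$g\le L+\frac{KZ}{F}.$$ In particular, if $\frac{Z}{F}=\frac{t}{K}$ for an integer $t$, then $g\le t+L$.
   Context: Notation: $[n]=\{1,\dots,n\}$. An $F\times K$ array $\mathbf{A}=[a_{j,k}]$ with entries either a symbol $\star$ or integers in $[S]$ is a $(K,L,F,Z,S)$ EPDA if: (C1) $\star$ appears exactly $Z$ times in each column; (C2) every integer in $[S]$ occurs at least once; (C3) no integer appears more than once in any column; (C4) for each $s\in[S]$, letting $\mathbf{A}^{(s)}$ be the subarray obtained by deleting all rows and columns of $\mathbf{A}$ not containing $s$, no row of $\mathbf{A}^{(s)}$ contains more than $L$ integer entries. The EPDA is $g$-regular if, in addition, each integer in $[S]$ appears exactly $g$ times in $\mathbf{A}$. The multi-antenna coded caching scheme obtained from an EPDA splits each file into $F$ subfiles, and makes one transmission of size $1/F$ file per integer $s\in[S]$, so its delivery time is $T=S/F$. *)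

(* Defs.v *)
From mathcomp Require Import all_boot all_order all_algebra.
Set Implicit Arguments. Unset Strict Implicit. Unset Printing Implicit Defensive.
Import GRing.Theory Num.Theory.

(* An F x K array whose entries are either the symbol star (None) or an
   integer (Some s).  Rows are indexed by 'I_F, columns by 'I_K. *)
Definition array (F K : nat) := 'I_F -> 'I_K -> option nat.

Definition entries_in_range F K S (A : array F K) : Prop :=
  forall j k s, A j k = Some s -> 1 <= s <= S.

Definition C1 F K Z (A : array F K) : Prop :=
  forall k : 'I_K, #|[set j : 'I_F | A j k == None]| = Z.

Definition C2 F K S (A : array F K) : Prop :=
  forall s, 1 <= s <= S -> exists j k, A j k = Some s.

Definition C3 F K (A : array F K) : Prop :=
  forall (k : 'I_K) (j1 j2 : 'I_F) s,
    A j1 k = Some s -> A j2 k = Some s -> j1 = j2.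

Definition rows_of F K (A : array F K) s : {set 'I_F} :=
  [set j | [exists k, A j k == Some s]].
Definition cols_of F K (A : array F K) s : {set 'I_K} :=
  [set k | [exists j, A j k == Some s]].

Definition C4 F K L S (A : array F K) : Prop :=
  forall s, 1 <= s <= S ->
    forall j, j \in rows_of A s ->
      #|[set k in cols_of A s | A j k != None]| <= L.

Definition EPDA (K L F Z S : nat) (A : array F K) : Prop :=
  [/\ entries_in_range S A, C1 Z A, C2 S A, C3 A & C4 L S A].

Definition regular (g F K S : nat) (A : array F K) : Prop :=
  forall s, 1 <= s <= S ->
    #|[set p : 'I_F * 'I_K | A p.1 p.2 == Some s]| = g.

Definition delivery_time (S F : nat) : rat := (S%:R / F%:R)%R.

Arguments EPDA : clear implicits.
Arguments regular : clear implicits.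

(* Main.v *)
Require Import Defs.
From mathcomp Require Import all_boot all_order all_algebra zify ring.
Import GRing.Theory Num.Theory.
Set Implicit Arguments.

Lemma cs_seq (I : Type) (r : seq I) (f : I -> nat) :
  (\sum_(i <- r) f i) ^ 2 <= size r * \sum_(i <- r) f i ^ 2.
Proof.
elim: r => [|a r IH]; first by rewrite !big_nil.
rewrite !big_cons /=.
have H2 : 2 * f a * \sum_(i <- r) f i <= size r * f a ^ 2 + \sum_(i <- r) f i ^ 2.
  rewrite big_distrr /=.
  have -> : size r * f a ^ 2 = \sum_(i <- r) f a ^ 2.
    by rewrite big_const_seq count_predT iter_addn_0 mulnC.
  rewrite -big_split /=; apply: leq_sum => i _; rewrite -mulnA; exact: (nat_Cauchy (f a) (f i)).
set X := \sum_(i <- r) f i in IH H2 *; set Y := \sum_(i <- r) f i ^ 2 in IH H2 *.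
nia.
Qed.

Lemma cs_ord (n : nat) (f : 'I_n -> nat) :
  (\sum_i f i) ^ 2 <= n * \sum_i f i ^ 2.
Proof.
have := @cs_seq _ (enum 'I_n) f; rewrite size_enum_ord !big_enum //.
Qed.

Lemma card_sumb (T : finType) (P : pred T) :
  #|[set x | P x]| = \sum_x (P x : nat).
Proof.
rewrite cardsE -sum1_card big_mkcond /=; apply: eq_bigr => x _.
rewrite unfold_in /=. by case: (P x).
Qed.
Arguments card_sumb {T}.

Lemma col_int F K Z (A : array F K) : C1 Z A ->
  forall k, \sum_j (A j k != None : nat) = F - Z.
Proof.
move=> h1 k; have := h1 k; rewrite (card_sumb (fun j => A j k == None)) => hz.
have : \sum_j ((A j k != None : nat) + (A j k == None : nat)) = F.
  rewrite (eq_bigr (fun _ => 1)); last by move=> j _; case: (A j k).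
  by rewrite sum1_card card_ord.
rewrite big_split /= hz; lia.
Qed.

Lemma total_int F K Z (A : array F K) : C1 Z A ->
  \sum_j \sum_k (A j k != None : nat) = K * (F - Z).
Proof.
move=> h1; rewrite exchange_big /= (eq_bigr (fun _ => F - Z)).
  rewrite big_const_ord iter_addn_0; lia.
by move=> k _; apply: col_int.
Qed.

Lemma total_vals F K S g (A : array F K) : entries_in_range S A -> regular g F K S A ->
  \sum_j \sum_k (A j k != None : nat) = S * g.
Proof.
move=> hr hg.
rewrite pair_bigA /=.
rewrite (eq_bigr (fun p => \sum_(i < S) (A p.1 p.2 == Some i.+1 : nat))); last first.
  move=> [j k] _ /=; case E: (A j k) => [s|]; last by rewrite big1.
  have /andP [h1 h2] := hr _ _ _ E.
  have hs : s.-1 < S by lia.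
  rewrite (bigD1 (Ordinal hs)) //= big1 ?addn0.
    by rewrite (prednK h1) eqxx.
  move=> i /eqP hi; apply/eqP; rewrite eqb0; apply/eqP => [[hE]]; apply: hi.
  apply: val_inj => /=; lia.
rewrite exchange_big /= (eq_bigr (fun _ => g)).
  rewrite big_const_ord iter_addn_0; lia.
move=> i _; rewrite -(hg i.+1). rewrite (card_sumb (fun p : 'I_F * 'I_K => A p.1 p.2 == Some i.+1)) //.
exact: ltn_ord.
Qed.

Lemma cols_card F K S g (A : array F K) s : C3 A -> regular g F K S A -> 1 <= s <= S ->
  #|cols_of A s| = g.
Proof.
move=> h3 hg hs.
have -> : cols_of A s = [set p.2 | p in [set p : 'I_F * 'I_K | A p.1 p.2 == Some s]].
  apply/setP => k; rewrite inE; apply/existsP/imsetP.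
    by move=> [j hj]; exists (j, k) => //; rewrite inE.
  by move=> [[j k'] hj ->]; exists j; rewrite inE in hj.
rewrite card_in_imset ?hg //.
move=> [j1 k1] [j2 k2]; rewrite !inE /= => /eqP e1 /eqP e2 ek; subst k2.
by rewrite (h3 _ _ _ _ e1 e2).
Qed.

Lemma row_lower K L F S g (A : array F K) j k0 s :
  entries_in_range S A -> C3 A -> C4 L S A -> regular g F K S A ->
  A j k0 = Some s ->
  g - L <= \sum_k ((A j k == None) && (k \in cols_of A s) : nat).
Proof.
move=> hr h3 h4 hg E.
have hs := hr _ _ _ E.
have hc := cols_card s h3 hg hs.
have hj : j \in rows_of A s by rewrite inE; apply/existsP; exists k0; rewrite E.
have := h4 _ hs _ hj.
rewrite (card_sumb (fun k => (k \in cols_of A s) && (A j k != None))).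
have : #|cols_of A s| = \sum_k (((k \in cols_of A s) && (A j k != None) : nat)
                + ((A j k == None) && (k \in cols_of A s) : nat)).
  rewrite -sum1_card big_mkcond /=; apply: eq_bigr => k _.
  by case: (k \in cols_of A s); case: (A j k).
rewrite big_split /= hc => -> hL. by rewrite leq_subLR leq_add2r.
Qed.

Definition cc F K (A : array F K) j k0 k :=
  (A j k == None) && (if A j k0 is Some s then k \in cols_of A s else false).

Lemma key K L F Z S g (A : array F K) :
  (0 < K)%N -> Z < F ->
  EPDA K L F Z S A -> regular g F K S A -> (g - L) * F <= K * Z.
Proof.
move=> hK hZF [hr h1 h2 h3 h4] hg.
set P := \sum_j \sum_k0 \sum_k (cc A j k0 k : nat).
have low : K * (F - Z) * (g - L) <= P.
  rewrite -(total_int h1) big_distrl /=; apply: leq_sum => j _.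
  rewrite big_distrl /=; apply: leq_sum => k0 _.
  rewrite /cc; case E: (A j k0) => [s|] /=; last by [].
  rewrite mul1n. exact: (row_lower j k0 hr h3 h4 hg E).
set z := fun j => \sum_k (A j k == None : nat).
set W := fun j => \sum_k (A j k != None : nat).
have hzW : forall j, z j + W j = K.
  move=> j; rewrite /z /W -big_split /=.
  rewrite (eq_bigr (fun _ => 1)); last by move=> k _; case: (A j k).
  by rewrite sum1_card card_ord.
have up : P <= \sum_j z j * W j.
  rewrite /P; apply: leq_sum => j _; rewrite exchange_big /= /z big_distrl /=.
  apply: leq_sum => k _; rewrite /cc; case: (A j k) => [a|] /=.
    by rewrite big1.
  rewrite mul1n; apply: leq_sum => k0 _; case: (A j k0) => //= s; exact: leq_b1.
have sumz : \sum_j z j = K * Z.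
  rewrite /z exchange_big /= (eq_bigr (fun _ => Z)).
    rewrite big_const_ord iter_addn_0; lia.
  by move=> k _; rewrite -(h1 k) (card_sumb (fun j => A j k == None)).
have TY : \sum_j z j * W j + \sum_j z j ^ 2 = K * (K * Z).
  rewrite -big_split /= -sumz big_distrr /=; apply: eq_bigr => j _.
  by rewrite -(hzW j); nia.
have cs := cs_ord z.
rewrite sumz in cs.
set T := \sum_j z j * W j in up TY.
set Y := \sum_j z j ^ 2 in TY cs.
have hF : F = Z + (F - Z) by lia.
move: (F - Z) hF low up TY cs => d hF low up TY cs.
set a := g - L in low *.
have hd : 0 < d by lia.
have h6 : F * T + F * Y = F * (K * (K * Z)) by rewrite -TY mulnDr.
have h7 : F * T <= K * K * Z * d.
  have : F * T + (K * Z) ^ 2 <= F * (K * (K * Z)) by rewrite -h6 leq_add2l.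
  rewrite hF; nia.
have h5 : K * d * (a * F) <= K * d * (K * Z).
  apply: (leq_trans _ (leq_trans h7 _)); last by nia.
  have : F * (K * d * a) <= F * T by rewrite leq_mul2l (leq_trans low up) orbT.
  nia.
by rewrite leq_pmul2l // muln_gt0 hK hd in h5.
Qed.
Unset Implicit Arguments.
Local Open Scope ring_scope.

Theorem lemma3 (K L F Z S g : nat) (A : array F K) :
  (0 < K)%N -> (0 < L)%N -> (L <= K)%N -> (0 < F)%N -> (0 < Z)%N ->
  (0 < S)%N -> (0 < g)%N ->
  EPDA K L F Z S A -> regular g F K S A ->
  [/\ delivery_time S F = (K%:R / g%:R) * (1 - Z%:R / F%:R) :> rat,
      (g%:R <= L%:R + K%:R * Z%:R / F%:R :> rat)
    & forall t : int, (Z%:R / F%:R = t%:~R / K%:R :> rat) ->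
        (g%:R <= t%:~R + L%:R :> rat)].
Proof.
move=> hK hL hLK hF hZ hS hg hE hreg.
have hE' := hE; case: hE' => hr h1 h2 h3 h4.
have ZF : (Z <= F)%N.
  by rewrite -(h1 (Ordinal hK)); apply: leq_trans (max_card _) _; rewrite card_ord.
have Sg : (S * g = K * (F - Z))%N by rewrite -(total_vals hr hreg) (total_int h1).
have ZF' : (Z < F)%N.
  rewrite ltn_neqAle ZF andbT; apply/eqP => eZ; move: Sg; rewrite eZ subnn muln0.
  by move/eqP; rewrite muln_eq0; case/orP => /eqP; lia.
have hkey := key hK ZF' hE hreg.
have Fn0 : F%:R != 0 :> rat by rewrite pnatr_eq0 -lt0n.
have gn0 : g%:R != 0 :> rat by rewrite pnatr_eq0 -lt0n.
have Kn0 : K%:R != 0 :> rat by rewrite pnatr_eq0 -lt0n.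
have part2 : g%:R <= L%:R + K%:R * Z%:R / F%:R :> rat.
  have hn : (g * F <= L * F + K * Z)%N by move: hkey; rewrite mulnBl leq_subLR.
  rewrite -(ler_pM2r (x := F%:R)) ?ltr0n // mulrDl divfK //.
  by rewrite -!natrM -natrD ler_nat.
split => //.
  have E : S%:R = K%:R * (F%:R - Z%:R) / g%:R :> rat.
    by rewrite -natrB // -natrM -Sg natrM mulfK.
  rewrite /delivery_time E; field.
  by rewrite Fn0 gn0.
move=> t ht.
have -> : t%:~R = K%:R * Z%:R / F%:R :> rat.
  by rewrite -mulrA ht mulrC divfK.
by rewrite addrC.
Qed.
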